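(* Let $X_i$ be a separable $\mathbb{R}$-rigid space for each $i\in I$. If a subspace $Y$ of $X=\prod_{i\in I}X_i$ fills all countable subproducts of $X$, then $Y$ is $\mathbb{R}$-rigid.
   Context: For nonempty $J\subseteq I$, $\pi_J\colon X\to X_J=\prod_{i\in J}X_i$ is the projection. A set $Y\subseteq X$ fills countable subproducts of $X$ if $\pi_J(Y)=X_J$ for every countable nonempty $J\subseteq I$. A space is $\mathbb{R}$-rigid if every continuous real-valued function on it is constant. *)

(* Defs.v *)
From HB Require Import structures.
From mathcomp Require Import all_boot all_order all_algebra.
From mathcomp Require Import all_classical all_reals all_analysis.
Set Implicit Arguments. Unset Strict Implicit. Unset Printing Implicit Defensive.
Import Order.TTheory GRing.Theory Num.Theory numFieldTopology.Exports.
Local Open Scope classical_set_scope.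
Local Open Scope ring_scope.

Definition separable (T : topologicalType) : Prop :=
  exists D : set T, countable D /\ dense D.

Definition R_rigid (R : realType) (T : topologicalType) : Prop :=
  forall f : T -> R, continuous f -> forall x y : T, f x = f y.

Definition R_rigid_subspace (R : realType) (T : topologicalType) (Y : set T) : Prop :=
  forall f : T -> R, {within Y, continuous f} ->
  forall x y : T, Y x -> Y y -> f x = f y.

Definition fills_countable_subproducts (I : Type) (X : I -> topologicalType)
    (Y : set (prod_topology X)) : Prop :=
  forall J : set I, countable J -> J !=set0 ->
  forall z : (forall j : {i : I | J i}, X (proj1_sig j)),
  exists y : prod_topology X, Y y /\ forall j : {i : I | J i}, y (proj1_sig j) = z j.

(* Main.v *)
Require Import Defs.
From HB Require Import structures.
From mathcomp Require Import all_boot all_order all_algebra.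
From mathcomp Require Import all_classical all_reals all_analysis.
From mathcomp Require Import lra.
Set Implicit Arguments. Unset Strict Implicit. Unset Printing Implicit Defensive.
Import Order.TTheory GRing.Theory Num.Theory numFieldTopology.Exports.
Local Open Scope classical_set_scope.
Local Open Scope ring_scope.

Fixpoint inL {T : Type} (x : T) (s : seq T) : Prop :=
  match s with [::] => False | y :: s' => y = x \/ inL x s' end.
Lemma inL_cat {T : Type} (x : T) s1 s2 : inL x (s1 ++ s2) <-> inL x s1 \/ inL x s2.
Proof. elim: s1 => [|y s1 IH] /=; first by split => [|[[]|]]; [right|]. tauto. Qed.

Lemma open_imp {T : topologicalType} (P : Prop) (A : set T) : open A -> open [set t | P -> A t].
Proof.
move=> oA; case: (pselect P) => h.
  by have -> : [set t | P -> A t] = A by apply/seteqP; split => t /=; [apply | move=> ? ?].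
have -> : [set t | P -> A t] = setT by apply/seteqP; split => t //= _ /h.
exact: openT.
Qed.

Definition pick {T : Type} (P : T -> Prop) (d : T) : T :=
  match pselect (exists t, P t) with left h => proj1_sig (cid h) | right _ => d end.
Lemma pickP {T : Type} (P : T -> Prop) d : (exists t, P t) -> P (pick P d).
Proof. by rewrite /pick; case: (pselect _) => [h _|h /h //]; exact: (proj2_sig (cid h)). Qed.
Lemma pick_cases {T : Type} (P : T -> Prop) d : P (pick P d) \/ pick P d = d.
Proof. by rewrite /pick; case: (pselect _) => [h|h]; [left; exact: (proj2_sig (cid h)) | right]. Qed.

Lemma inL_nth {T : Type} (x : T) s d : inL x s -> exists m, nth d s m = x.
Proof.
elim: s => [|y s IH] //= [<-|h]; first by exists 0%N.
by have [m hm] := IH h; exists m.+1.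
Qed.
Lemma inL_map {T U : Type} (g : T -> U) y s : inL y (map g s) -> exists x, inL x s /\ g x = y.
Proof.
elim: s => [|x s IH] //= [<-|h]; first by exists x; split => //; left.
by have [x' [h1 h2]] := IH h; exists x'; split => //; right.
Qed.
Lemma inL_map2 {T U : Type} (g : T -> U) x s : inL x s -> inL (g x) (map g s).
Proof. by elim: s => [|y s IH] //= [<-|h]; [left | right; apply: IH]. Qed.
Lemma inL_filter {T : Type} (p : pred T) x s : inL x (seq.filter p s) <-> inL x s /\ p x.
Proof.
elim: s => [|y s IH] /=; first by split => -[].
case: ifP => py /=.
  by rewrite IH; split => [[<-|[]]|[[<-|]]]; tauto.
rewrite IH; split => [[]|[[<-|]]]; try tauto.
by rewrite py.
Qed.

Lemma countable_range_sub {T : Type} {C : countType} (A : set T) (g : C -> T) :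
  A `<=` range g -> countable A.
Proof.
move=> h; apply: (card_le_trans (subset_card_le h)).
apply: (card_le_trans (card_image_le _ _)); exact: countableP.
Qed.

Section Prod.
Variables (I : Type) (X : I -> topologicalType).
Local Notation PX := (prod_topology X).
Definition cI := {classic I}.
Lemma projc (i : I) : continuous (fun u : PX => u i).
Proof. exact: (@proj_continuous cI X i). Qed.

Definition box (F : seq I) (W : forall i, set (X i)) : set PX :=
  [set z | forall i, inL i F -> W i (z i)].

Lemma box_open F W : (forall i, open (W i)) -> open (box F W).
Proof.
move=> oW; elim: F => [|i F IH].
  have -> : box [::] W = setT by apply/seteqP; split => // z _ i [].
  exact: openT.
have -> : box (i :: F) W = (fun u : PX => u i) @^-1` (W i) `&` box F W.
  apply/seteqP; split => z /=.
    by move=> h; split; [exact: (h i (or_introl erefl)) | move=> j hj; exact: (h j (or_intror hj))].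
  by case=> h1 h2 j [<-|hj] //; exact: h2.
apply: openI => //.
by move: (@projc i) => /continuousP; apply.
Qed.

Lemma box_nbhs (u : PX) (B : set PX) : nbhs u B ->
  exists F W, (forall i, open (W i)) /\ box F W u /\ box F W `<=` B.
Proof.
pose G := [set B : set PX | exists F W, (forall i, open (W i)) /\ box F W u /\ box F W `<=` B].
have FG : Filter G.
  constructor.
  - exists [::], (fun _ => setT); split; first by move=> i; exact: openT.
    by split; [move=> i /= []| by []].
  - move=> P Q [F1 [W1 [op1 [u1 s1] ] ] ].
    move=> [F2 [W2 [op2 [u2 s2] ] ] ].
    exists (F1 ++ F2), (fun i => [set t | (inL i F1 -> W1 i t) /\ (inL i F2 -> W2 i t)]).
    split; [|split].
    + move=> i; apply: (@openI _ [set t | inL i F1 -> W1 i t] [set t | inL i F2 -> W2 i t]); exact: open_imp.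
    + by move=> i _; split; [apply: u1 | apply: u2].
    + move=> z hz; split; [apply: s1 | apply: s2] => i hi.
      * by apply: (hz i (proj2 (inL_cat _ _ _) (or_introl hi))).1.
      * by apply: (hz i (proj2 (inL_cat _ _ _) (or_intror hi))).2.
  - move=> P Q PQ [F [W [op [uF s] ] ] ]; exists F, W; split => //; split => //.
    by move=> z /s /PQ.
have H := @cvg_sup (forall i, X i) I (fun i => Topological.class (initial_topology (fun f : (forall i, X i) => f i))) G u FG.
have [_ H2] := H.
move=> nB; apply: (H2 _ B nB) => i A /= nA.
rewrite nbhs_filterE.
move: nA => [Bo [[V oV <-] uV] sBA].
exists [:: i], (@dfwith cI (fun j => set (X j)) (fun _ => setT) i V).
split; [|split].
- move=> j; case: (@eqVneq cI i j) => [<-|nij]; first by rewrite dfwithin.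
  by rewrite dfwithout //; exact: openT.
- by move=> j /= [<-|[]]; rewrite dfwithin.
- by move=> z hz; apply: sBA; have := hz i (or_introl erefl); rewrite dfwithin.
Qed.

Lemma dfwith_self (z : PX) (i : I) : @dfwith cI X z i (z i) = z.
Proof.
apply: functional_extensionality_dep => j.
by case: (@eqVneq cI i j) => [<-|nij]; [rewrite dfwithin | rewrite dfwithout].
Qed.

Lemma prod_rigid (R : realType) : (forall i, R_rigid R (X i)) -> R_rigid R PX.
Proof.
move=> rX g cg.
have fin : forall (p : PX) F (z : PX), (forall j, ~ inL j F -> z j = p j) -> g z = g p.
  move=> p; elim=> [|i F IH] z hz.
    by congr g; apply: functional_extensionality_dep => j; apply: hz.
  pose z' : PX := @dfwith cI X z i (p i).
  have -> : g z = g z'.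
    pose h := fun t : X i => g (@dfwith cI X z i t : PX).
    have ch : continuous h.
      move=> t; apply: (@continuous_comp _ PX _ (fun t => @dfwith cI X z i t) g t); last exact: cg.
      exact: (@dfwith_continuous cI X z i).
    have := rX i h ch (z i) (p i); rewrite /h dfwith_self => ->.
    by [].
  apply: IH => j nj; rewrite /z'.
  case: (@eqVneq cI i j) => [<-|nij]; first by rewrite dfwithin.
  rewrite dfwithout // hz //= => -[eij|//].
  by move/eqP: nij; apply; rewrite eij.
suff key : forall p w : PX, g w = g p by move=> x y; rewrite (key x y).
move=> p w; apply/eqP/negPn/negP => ne.
have nN : nbhs (g w) [set r | r != g p].
  by apply: open_nbhs_nbhs; split; [exact: open_neq | exact: ne].
have hN := cg w _ nN.
have [F [W [oW [wF sF]]]] := box_nbhs hN.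
pose z : PX := fun j => if pselect (inL j F) then w j else p j.
have zF : box F W z.
  by move=> j hj; rewrite /z; case: (pselect (inL j F)) => h //; apply: wF.
have := sF z zF => /=.
rewrite (fin p F z) ?eqxx // => j nj.
by rewrite /z; case: (pselect (inL j F)).
Qed.
End Prod.

Unset Implicit Arguments.
Section Main.
Variables (R : realType) (I : Type) (X : I -> topologicalType) (Y : set (prod_topology X)).
Local Notation PX := (prod_topology X).
Hypothesis sepX : forall i, separable (X i).
Hypothesis fillY : fills_countable_subproducts Y.
Variable f : PX -> R.
Hypothesis hf : {within Y, continuous f}.
Variable x0 : PX.
Hypothesis Yx0 : Y x0.
Variable i0 : I.

Lemma fillX (A : set I) (q : PX) : countable A -> exists y, Y y /\ forall i, A i -> y i = q i.
Proof.
move=> cA; case: (pselect (A !=set0)) => hA.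
  have [y [Yy hy]] := fillY A cA hA (fun j => q (proj1_sig j)).
  by exists y; split => // i Ai; exact: (hy (exist _ i Ai)).
by exists x0; split => // i Ai; exfalso; apply: hA; exists i.
Qed.

Lemma hcont (u : PX) (e : R) : Y u -> 0 < e -> exists F W, (forall i, open (W i)) /\
  box F W u /\ forall z, box F W z -> Y z -> `|f u - f z| < e.
Proof.
move=> Yu e0; have := (subspace_continuousP Y f).1 hf u Yu.
move=> /(_ _ (nbhsx_ballx (f u) _ e0)) /= hN.
have [F [W [oW [uF sF]]]] := box_nbhs hN.
exists F, W; split => //; split => // z zF Yz; exact: sF z zF Yz.
Qed.


Definition Dn i : set (X i) := proj1_sig (cid (sepX i)).
Lemma Dn_prop i : countable (Dn i) /\ dense (Dn i).
Proof. exact: (proj2_sig (cid (sepX i))). Qed.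
Definition phi i : X i -> nat := proj1_sig (cid (elimT (countable_injP _) (Dn_prop i).1)).
Lemma phi_inj i : {in Dn i &, injective (phi i)}.
Proof. exact: (proj2_sig (cid (elimT (countable_injP _) (Dn_prop i).1))). Qed.
Definition d i (b : nat) : X i := pick (fun t => Dn i t /\ phi i t = b) (x0 i).

Lemma dprop i (W : set (X i)) : open W -> W !=set0 -> exists b, W (d i b).
Proof.
move=> oW nW; have [t [Wt Dt]] := (Dn_prop i).2 W nW oW.
exists (phi i t).
have [h1 h2] := @pickP _ (fun t' => Dn i t' /\ phi i t' = phi i t) (x0 i) (ex_intro _ t (conj Dt erefl)).
have -> : d i (phi i t) = t by apply: (phi_inj i) => //; rewrite inE.
exact: Wt.
Qed.

Definition BFP (s : PX) (n : nat) (p : seq I * (forall i, set (X i))) : Prop :=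
  (forall i, open (p.2 i)) /\ box p.1 p.2 s /\
  forall z, box p.1 p.2 z -> Y z -> `|f s - f z| < n.+1%:R^-1.
Definition BF s n := pick (BFP s n) ([::], fun _ => setT).
Lemma BFok s n : Y s -> BFP s n (BF s n).
Proof.
move=> Ys; apply: pickP.
have [F [W [oW [sF h]]]] := @hcont s (n.+1%:R^-1) Ys (ltac:(by rewrite invr_gt0 ltr0Sn)).
by exists (F, W).
Qed.

Definition lift (e : nat -> I) (l : seq (nat * nat)) : PX :=
  pick (fun y => Y y /\ forall a b, inL (a, b) l -> y (e a) = d (e a) b) x0.
Lemma liftY e l : Y (lift e l).
Proof. rewrite /lift; set P := (fun y : PX => Y y /\ _); by case: (pick_cases P x0) => [[]|->]. Qed.

Definition code := (nat + (seq (nat * nat) * nat * nat))%type.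
Definition step (e : nat -> I) : nat -> I := fun c =>
  match @unpickle code c with
  | Some (inl a) => e a
  | Some (inr (l, n, m)) => nth (e 0%N) (BF (lift e l) n).1 m
  | None => e 0%N end.
Fixpoint E (k : nat) : nat -> I :=
  match k with 0%N => fun _ => i0 | k'.+1 => step (E k') end.
Definition J : set I := [set i | exists k c, E k c = i].
Definition S : set PX := [set s | exists k l, s = lift (E k) l].

Lemma J_count : countable J.
Proof.
apply: (@countable_range_sub _ _ _ (fun p : nat * nat => E p.1 p.2)).
by move=> i [k [c <-]]; exists (k, c).
Qed.

Lemma E_step k a : E k.+1 (pickle (inl a : code)) = E k a.
Proof. by rewrite /= /step pickleK. Qed.

Lemma E_mono k k' a : (k <= k')%N -> exists c, E k' c = E k a.
Proof.
elim: k' => [|k' IH].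
  by rewrite leqn0 => /eqP ->; exists a.
rewrite leq_eqVlt => /orP [/eqP ->|]; first by exists a.
rewrite ltnS => /IH [c hc]; exists (pickle (inl c : code)).
by rewrite E_step.
Qed.

Lemma propA k l n : let s := lift (E k) l in
  BFP s n (BF s n) /\ forall i, inL i (BF s n).1 -> J i.
Proof.
move=> s; split; first exact/BFok/liftY.
move=> i /(inL_nth (E k 0%N)) [m hm].
exists k.+1, (pickle (inr (l, n, m) : code)).
by rewrite /= /step pickleK.
Qed.

Lemma finite_stage F : (forall i, inL i F -> J i) ->
  exists k, forall i, inL i F -> exists a, E k a = i.
Proof.
elim: F => [|i F IH] hF; first by exists 0%N.
have [k1 [c1 h1]] := hF i (or_introl erefl).
have [k2 h2] := IH (fun j hj => hF j (or_intror hj)).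
exists (maxn k1 k2) => j /= [<-|hj].
  by have [c hc] := @E_mono k1 (maxn k1 k2) c1 (leq_maxl _ _); exists c; rewrite hc.
have [a ha] := h2 j hj.
by have [c hc] := @E_mono k2 (maxn k1 k2) a (leq_maxr _ _); exists c; rewrite hc.
Qed.

Lemma countable_JL (L : seq I) : countable [set i | J i \/ inL i L].
Proof.
apply: (@countable_range_sub _ _ _ (fun p : (nat * nat) + nat =>
  match p with inl p => E p.1 p.2 | inr m => nth i0 L m end)).
move=> i [[k [c <-]]|/(inL_nth i0) [m hm]]; first by exists (inl (k, c)).
by exists (inr m).
Qed.

Lemma propB F W u : (forall i, inL i F -> J i) -> (forall i, open (W i)) -> box F W u ->
  exists s, S s /\ box F W s.
Proof.
move=> FJ oW uF.
have [k hk] := finite_stage F FJ.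
have hA0 : forall i, exists a, inL i F -> E k a = i.
  move=> i; case: (pselect (inL i F)) => h; last by exists 0%N.
  by have [a ha] := hk i h; exists a.
have [A hA] := choice hA0.
have hB0 : forall i, exists b, inL i F -> W i (d i b).
  move=> i; case: (pselect (inL i F)) => h; last by exists 0%N.
  by have [b hb] := dprop i (W i) (oW i) (ex_intro _ (u i) (uF i h)); exists b.
have [B hB] := choice hB0.
pose l := map (fun i => (A i, B i)) F.
have ex : exists y, Y y /\ forall a b, inL (a, b) l -> y (E k a) = d (E k a) b.
  have [y [Yy hy]] := fillX [set i | J i \/ inL i F] (fun i => d i (B i)) (countable_JL F).
  exists y; split => // a b /(@inL_map _ _ (fun i => (A i, B i))) [i [iF e]]; case: e => <- <-.
  by rewrite (hA i iF); apply: hy; right.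
have [Ys hs] := @pickP _ (fun y => Y y /\ forall a b, inL (a, b) l -> y (E k a) = d (E k a) b) x0 ex.
exists (lift (E k) l); split; first by exists k, l.
move=> i iF; have := hs (A i) (B i) (inL_map2 (fun i => (A i, B i)) iF).
rewrite /lift (hA i iF) => ->; exact: hB.
Qed.

Lemma key u v : Y u -> Y v -> (forall i, J i -> u i = v i) -> f u = f v.
Proof.
move=> Yu Yv uv; apply/eqP; apply/negPn/negP => ne.
have D0 : 0 < `|f u - f v| by rewrite normr_gt0 subr_eq0.
set D := `|f u - f v| in D0 *.
have D4 : 0 < D / 4 by rewrite divr_gt0.
have [Fu [Wu [oWu [uFu hu]]]] := hcont u (D/4) Yu D4.
have [Fv [Wv [oWv [vFv hv]]]] := hcont v (D/4) Yv D4.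
pose F := seq.filter (fun i => `[< J i >]) (Fu ++ Fv).
pose W := fun i => [set t | (inL i Fu -> Wu i t) /\ (inL i Fv -> Wv i t)].
have oW : forall i, open (W i).
  by move=> i; apply: (@openI _ [set t | inL i Fu -> Wu i t] [set t | inL i Fv -> Wv i t]); exact: open_imp.
have FJ : forall i, inL i F -> J i by move=> i /inL_filter [_ /asboolP].
have uF : box F W u.
  move=> i /inL_filter [_ /asboolP Ji]; split => h; first exact: uFu.
  by rewrite (uv i Ji); exact: vFv.
have [s [[k [l es]] sF]] := propB F W u FJ oW uF.
have [n hn] : exists n : nat, n.+1%:R^-1 < D / 4.
  have a0 : 0 <= 4 / D by rewrite divr_ge0 // ltW.
  have := archi_boundP a0; set N := Num.Def.archi_bound _ => hN.
  exists N.
  have hN' : 4 / D < N.+1%:R by apply: (lt_trans hN); rewrite ltr_nat.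
  have m0 : 0 < N.+1%:R :> R by rewrite ltr0Sn.
  rewrite ltr_pdivrMr // in hN'.
  rewrite -[X in X < _]div1r ltr_pdivrMr //.
  nra.
have [[oWs [sFs hs]] FsJ] := propA k l n.
rewrite -es in oWs sFs hs FsJ.
have mk : forall (G : seq I) (WG : forall i, set (X i)) (z : PX), box G WG z ->
    (forall i, inL i G -> J i -> inL i F) -> (forall i, inL i G -> J i -> WG i (s i)) ->
    exists t, Y t /\ box (BF s n).1 (BF s n).2 t /\ box G WG t.
  move=> G WG z zG _ GW.
  have [t [Yt ht]] := fillX [set i | J i \/ inL i G]
     (fun i => if pselect (J i) then s i else z i) (countable_JL G).
  exists t; split => //; split.
    move=> i hi; have Ji := FsJ i hi; rewrite ht; last by left.
    case: (pselect (J i)) => [h|h]; [exact: sFs | by case: (h Ji)].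
  move=> i hi; rewrite ht; last by right.
  by case: (pselect (J i)) => Ji; [exact: GW | exact: zG].
have [t [Yt [tFs tFu]]] : exists t, Y t /\ box (BF s n).1 (BF s n).2 t /\ box Fu Wu t.
  apply: (mk Fu Wu u uFu).
    by move=> i hi Ji; apply/inL_filter; split; [apply/inL_cat; left | apply/asboolP].
  move=> i hi Ji.
  have iF : inL i F by apply/inL_filter; split; [apply/inL_cat; left | apply/asboolP].
  exact: (sF i iF).1 hi.
have [t' [Yt' [t'Fs t'Fv]]] : exists t, Y t /\ box (BF s n).1 (BF s n).2 t /\ box Fv Wv t.
  apply: (mk Fv Wv v vFv).
    by move=> i hi Ji; apply/inL_filter; split; [apply/inL_cat; right | apply/asboolP].
  move=> i hi Ji.
  have iF : inL i F by apply/inL_filter; split; [apply/inL_cat; right | apply/asboolP].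
  exact: (sF i iF).2 hi.
have h1 := hu t tFu Yt.
have h2 := hs t tFs Yt.
have h3 := hv t' t'Fv Yt'.
have h4 := hs t' t'Fs Yt'.
have e1 := ler_distD (f t) (f u) (f v).
have e2 := ler_distD (f s) (f t) (f v).
have e3 := ler_distD (f t') (f s) (f v).
rewrite (distrC (f t) (f s)) in e2.
rewrite (distrC (f t') (f v)) in e3.
rewrite -/D in e1.
move: (n.+1%:R^-1 : R) hn h2 h4 => eta hn h2 h4. clearbody D. lra.
Qed.

Definition liftJ (w : PX) : PX := pick (fun y => Y y /\ forall i, J i -> y i = w i) x0.
Lemma liftJ_ok w : Y (liftJ w) /\ forall i, J i -> liftJ w i = w i.
Proof. exact: (@pickP _ (fun y => Y y /\ forall i, J i -> y i = w i) x0 (fillX J w J_count)). Qed.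
Definition g w := f (liftJ w).

Lemma g_cont : continuous (g : PX -> R).
Proof.
move=> w N nN /=.
have [Yu hu] := liftJ_ok w.
set u := liftJ w in Yu hu *.
have hN := (subspace_continuousP Y f).1 hf u Yu _ nN.
have [F [W [oW [uF sF]]]] := box_nbhs hN.
pose W' := fun i => [set t | J i -> W i t].
apply: (@filterS _ _ _ (box F W')).
  move=> w' w'F.
  have [u' [Yu' hu']] := fillX [set i | J i \/ inL i F]
     (fun i => if pselect (J i) then w' i else u i) (countable_JL F).
  have u'F : box F W u'.
    move=> i hi; rewrite hu'; last by right.
    by case: (pselect (J i)) => Ji; [exact: w'F | exact: uF].
  have := sF u' u'F Yu'.
  have [Yl hl] := liftJ_ok w'.
  rewrite /preimage /g /= (key (liftJ w') u' Yl Yu') //.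
  move=> i Ji; rewrite hl // hu'; last by left.
  by case: (pselect (J i)).
apply: open_nbhs_nbhs; split; first by apply: box_open => i; exact: open_imp.
by move=> i hi Ji; rewrite -(hu i Ji); exact: uF.
Qed.

End Main.

Theorem corollary3p6 (R : realType) (I : Type) (X : I -> topologicalType)
    (Y : set (prod_topology X)) :
  (forall i, separable (X i)) ->
  (forall i, R_rigid R (X i)) ->
  fills_countable_subproducts Y ->
  R_rigid_subspace R Y.
Proof.
move=> sep rig fill f hf x y Yx Yy.
case: (pselect (exists i : I, True)) => [[i0 _]|nI]; last first.
  by congr f; apply: functional_extensionality_dep => i; exfalso; apply: nI; exists i.
have cg := g_cont R I X Y sep fill f hf x Yx i0.
have := prod_rigid rig cg x y.
rewrite /g.
have [Y1 h1] := liftJ_ok R I X Y sep fill f x Yx i0 x.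
have [Y2 h2] := liftJ_ok R I X Y sep fill f x Yx i0 y.
rewrite (key R I X Y sep fill f hf x Yx i0 _ x Y1 Yx h1).
by rewrite (key R I X Y sep fill f hf x Yx i0 _ y Y2 Yy h2).
Qed.
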